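(* Let $S=(\mathcal{E},\Sigma,X,\mathcal{O})$ be a distinguishable experiment entity, with central eigen closure system $\mathcal{Y}_{eig}$ and state eigen closure system $\mathcal{F}_{eig}$. Then $\mathcal{F}_{eig}=\mathcal{Y}_{eig}(state)$.
   Context: An entity $S=(\mathcal{E},\Sigma,X,\mathcal{O})$ consists of sets $\mathcal{E},\Sigma$ and for each $e\in\mathcal{E},p\in\Sigma$ a nonempty set $O(e,p)$, with $X=\bigcup O(e,p)$; $O(e)=\bigcup_pO(e,p)$. It is a distinguishable experiment entity iff $O(e)\cap O(f)=\emptyset$ for all distinct $e,f\in\mathcal{E}$. Central eigen map: $(e,p)\in eig(A)\iff O(e,p)\subseteq A$ for $A\subseteq X$; $\mathcal{Y}_{eig}=\{eig(A):A\subseteq X\}$. For $Y\in\mathcal{Y}_{eig}$, $Y_{state}=\{p\in\Sigma:(e,p)\in Y\text{ for all }e\in\mathcal{E}\}$ and $\mathcal{Y}_{eig}(state)=\{Y_{state}:Y\in\mathcal{Y}_{eig}\}$. For $e\in\mathcal{E}$, $eig_e(A)=\{p: O(e,p)\subseteq A\}$ for $A\subseteq O(e)$, $\mathcal{F}(e)=\{eig_e(A):A\subseteq O(e)\}$, and $\mathcal{F}_{eig}$ is the set of all intersections of families of elements of $\bigcup_e\mathcal{F}(e)$. *)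

(* Defs.v *)
From mathcomp Require Import all_boot.
From mathcomp Require Import boolp classical_sets.
Set Implicit Arguments. Unset Strict Implicit. Unset Printing Implicit Defensive.
Local Open Scope classical_set_scope.

Section Entity.
Variables (E Sig Out : Type) (O : E -> Sig -> set Out).

Definition ent_X : set Out := \bigcup_(e in [set: E]) \bigcup_(p in [set: Sig]) O e p.
Definition ent_Oe (e : E) : set Out := \bigcup_(p in [set: Sig]) O e p.

Definition entity_nonempty : Prop := forall e p, O e p !=set0.

Definition distinguishable : Prop :=
  forall e f : E, e <> f -> ent_Oe e `&` ent_Oe f = set0.

Definition eig (A : set Out) : set (E * Sig) := [set ep | O ep.1 ep.2 `<=` A].

Definition Y_eig : set (set (E * Sig)) :=
  [set Y | exists A, A `<=` ent_X /\ Y = eig A].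

Definition Y_state (Y : set (E * Sig)) : set Sig := [set p | forall e, Y (e, p)].

Definition Y_eig_state : set (set Sig) :=
  [set Z | exists Y, Y_eig Y /\ Z = Y_state Y].

Definition eig_e (e : E) (A : set Out) : set Sig := [set p | O e p `<=` A].

Definition F_e (e : E) : set (set Sig) :=
  [set Z | exists A, A `<=` ent_Oe e /\ Z = eig_e e A].

(* all intersections of families of elements of \bigcup_e F(e);
   the empty family has intersection Sig (setT) *)
Definition F_eig : set (set Sig) :=
  [set Z | exists G : set (set Sig), G `<=` \bigcup_(e in [set: E]) F_e e /\
                                    Z = \bigcap_(W in G) W].
End Entity.

(* Main.v *)
Require Import Defs.
From mathcomp Require Import all_boot.
From mathcomp Require Import boolp classical_sets.
Local Open Scope classical_set_scope.

Theorem mainTheorem7 (E Sig Out : Type) (O : E -> Sig -> set Out)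
  (Hne : entity_nonempty O) (Hdist : distinguishable O) :
  F_eig O = Y_eig_state O.
Proof.
apply/seteqP; split => Z.
- move=> [G [HG ->]].
  pose B := fun e : E => [set x | ent_Oe O e x /\
     forall A', A' `<=` ent_Oe O e -> G (eig_e O e A') -> A' x].
  pose A := [set x | exists e, B e x].
  exists (eig O A); split.
    exists A; split => //.
    move=> x [e [[p _ Hp] _]].
    by exists e => //; exists p.
  apply/seteqP; split => p /=.
  + move=> Hp e x Hx /=.
    exists e; split; first by exists p.
    move=> A' _ HA'; exact: (Hp _ HA' x Hx).
  + move=> Hp W HW.
    have [e _ [A' [HA' EW]]] := HG W HW.
    rewrite EW /eig_e /= => x Hx.
    have [f [Hf Hall]] := Hp e x Hx.
    have ef : e = f.
      apply: contrapT => ne.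
      have := Hdist _ _ ne; rewrite -subset0 => H0.
      apply: (H0 x); split => //; by exists p.
    subst f.
    apply: Hall => //; by rewrite -EW.
- move=> [Y [[A [HA ->]] ->]].
  exists [set W | exists e, W = eig_e O e (A `&` ent_Oe O e)]; split.
    move=> W [e ->]; exists e => //.
    by exists (A `&` ent_Oe O e); split => // x [].
  apply/seteqP; split => p /=.
  + move=> Hp W [e ->] x Hx /=; split; first exact: Hp Hx.
    by exists p.
  + move=> Hp e x Hx.
    have := Hp _ (ex_intro _ e erefl) x Hx; by case.
Qed.
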